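(* Let $p$ be a prime with $p\equiv1\pmod 3$, $f=\frac{p-1}{3}$, $G\cong C_p$ with generator $a$, and $l$ a primitive root modulo $p$. For $i\in\{1,2,3\}$ let $X_i=\{a^{l^{3j+(i-1)}}:j=0,\dots,f-1\}$, and for $i,j,k\in\{1,2,3\}$ let $c_{ij}^k$ be the number of pairs $(x,y)\in X_i\times X_j$ with $xy=z$, for a fixed $z\in X_k$ (this number does not depend on $z$). For $i\in\{1,2\}$ let $T_i=\{c_{11}^1+2(i-1),c_{11}^2,c_{11}^3\}$. Then $|T_i|\in\{2,3\}$, and $|T_i|=2$ if and only if $p=t^2+3i^2$ for some integer $t$. *)

(* Defs.v *)
From HB Require Import structures.
From mathcomp Require Import all_boot all_order all_fingroup all_algebra.
Set Implicit Arguments. Unset Strict Implicit. Unset Printing Implicit Defensive.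
Import GRing.Theory Num.Theory.

Definition Xcl (gT : finGroupType) (a : gT) (l f i : nat) : {set gT} :=
  [set (a ^+ (l ^ (3 * j + (i - 1)))%N)%g | j : 'I_f].

Definition cnum (gT : finGroupType) (a : gT) (l f i j : nat) (z : gT) : nat :=
  #|[set xy : gT * gT | [&& xy.1 \in Xcl a l f i, xy.2 \in Xcl a l f j
                          & (xy.1 * xy.2)%g == z]]|.

Definition card3 (n1 n2 n3 : nat) : nat := size (undup [:: n1; n2; n3]).

(* Main.v *)
Require Import Defs.
From HB Require Import structures.
From mathcomp Require Import all_boot all_order all_fingroup all_algebra.
From mathcomp Require Import cyclic zify ring lra.
Import GRing.Theory Num.Theory.

Section Cyc.
Variables (p l : nat).
Hypotheses (hp : prime p) (hp3 : p %% 3 = 1)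
  (hl : ((p.-1).-primitive_root (l%:R : 'Z_p))%R).

Local Notation L := (l%:R : 'Z_p)%R.
Local Notation f := ((p - 1) %/ 3).

Lemma pf : p.-1 = 3 * f. Proof. lia. Qed.
Lemma p_gt1 : 1 < p. Proof. exact: prime_gt1. Qed.
Lemma f_gt1 : 1 < f.
Proof.
have h1 := p_gt1.
have : f != 1.
  apply/eqP=> e; have e4 : p = 4 by lia.
  by move: hp; rewrite e4.
lia.
Qed.

Lemma cardZ : #|'Z_p| = p.
Proof. by rewrite card_ord Zp_cast // p_gt1. Qed.

Lemma Lexp_mod k : (L ^+ k = L ^+ (k %% p.-1))%R.
Proof. by rewrite (prim_expr_mod hl). Qed.

Lemma Lexp_eq m n : (L ^+ m = L ^+ n)%R -> m %% 3 = n %% 3.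
Proof.
move/eqP; rewrite (eq_prim_root_expr hl) => /eqP e.
have d : 3 %| p.-1 by rewrite pf dvdn_mulr.
by rewrite -(modn_dvdm m d) e (modn_dvdm n d).
Qed.

Lemma Lexp_inj m n : m < p.-1 -> n < p.-1 -> (L ^+ m = L ^+ n)%R -> m = n.
Proof.
move=> hm hn /eqP; rewrite (eq_prim_root_expr hl) !modn_small //.
by move/eqP.
Qed.

Lemma L1 : (L ^+ p.-1 = 1)%R.
Proof. exact: (prim_expr_order hl). Qed.

Lemma Linv t : exists e, (L ^+ e * L ^+ t = 1)%R /\ (e + t) %% 3 = 0.
Proof.
exists (p.-1 * t - t); split.
  rewrite -exprD subnK; last by rewrite leq_pmull // pf; have := f_gt1; lia.
  by rewrite exprM L1 expr1n.
rewrite subnK; last by rewrite leq_pmull // pf; have := f_gt1; lia.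
rewrite pf; lia.
Qed.

Definition C (r : nat) : {set 'Z_p} := [set (L ^+ (3 * j + r %% 3))%R | j : 'I_f].

Lemma memC x r : x \in C r <-> exists k, x = (L ^+ k)%R /\ k %% 3 = r %% 3.
Proof.
split.
  by case/imsetP=> j _ ->; exists (3 * j + r %% 3); split=> //; lia.
case=> k [-> hk]; apply/imsetP.
have hp1 : 0 < p.-1 by rewrite pf; have := f_gt1; lia.
have hm : k %% p.-1 < p.-1 by rewrite ltn_pmod.
have d : 3 %| p.-1 by rewrite pf dvdn_mulr.
have hm3 : (k %% p.-1) %% 3 = k %% 3 by rewrite (modn_dvdm k d).
move: hm hm3; rewrite pf; set m := k %% (3 * f) => hm hm3.
have hj : m %/ 3 < f by lia.
exists (Ordinal hj) => //=.
rewrite Lexp_mod pf -/m; congr (_ ^+ _)%R; lia.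
Qed.

Lemma memCL k r : ((L ^+ k)%R \in C r) = (k %% 3 == r %% 3).
Proof.
apply/idP/eqP.
  by case/memC=> k' [/Lexp_eq e h]; rewrite e.
by move=> h; apply/memC; exists k.
Qed.

Lemma Cmod r s : r %% 3 = s %% 3 -> C r = C s.
Proof. by rewrite /C => ->. Qed.

Lemma cardC r : #|C r| = f.
Proof.
rewrite card_imset ?card_ord //.
move=> i j /Lexp_inj h; apply/val_inj => /=.
have hr : r %% 3 < 3 by rewrite ltn_mod.
have hi := ltn_ord i; have hj := ltn_ord j.
have : 3 * i + r %% 3 = 3 * j + r %% 3 by apply: h; rewrite pf; lia.
lia.
Qed.

Lemma CM x y r s : x \in C r -> y \in C s -> (x * y)%R \in C (r + s).
Proof.
case/memC=> k [-> hk] /memC [m [-> hm]].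
by rewrite -exprD memCL; apply/eqP; lia.
Qed.

Lemma LC k : (L ^+ k)%R \in C k.
Proof. by rewrite memCL. Qed.

Lemma C_neq0 x r : x \in C r -> x != 0%R.
Proof.
case/memC=> k [-> _]; apply/eqP=> e.
have : (L ^+ (k * p.-1) = 1)%R by rewrite mulnC exprM L1 expr1n.
rewrite exprM e expr0n.
have -> : (p.-1 == 0) = false by rewrite pf; have := f_gt1; lia.
move/eqP; rewrite eq_sym oner_eq0 //.
Qed.

Lemma CdisjP x r s : x \in C r -> x \in C s -> r %% 3 = s %% 3.
Proof.
by case/memC=> k [-> hk]; rewrite memCL => /eqP; rewrite hk.
Qed.

Lemma Cmul_iff x r k : ((L ^+ k * x)%R \in C (r + k)) = (x \in C r).
Proof.
apply/idP/idP; last by move=> h; rewrite addnC; apply: (@CM _ _ k r) => //; apply: LC.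
move=> h; have [e [he e3]] := Linv k.
have := @CM _ _ e (r + k) (LC e) h; rewrite mulrA he mul1r.
by rewrite (@Cmod _ r) //; lia.
Qed.

Lemma Ccover x : x != 0%R -> exists k, x = (L ^+ k)%R.
Proof.
move=> x0.
pose g := fun k : 'I_p.-1 => (L ^+ k)%R.
have gi : injective g by move=> i j /Lexp_inj h; apply/val_inj; apply: h.
have sub : g @: setT \subset [set~ 0%R].
  apply/subsetP=> y /imsetP [k _ ->]; rewrite !inE.
  by apply: (@C_neq0 _ k); apply: LC.
have : g @: setT == [set~ 0%R].
  rewrite eqEcard sub /= cardsC1 card_imset // cardsT card_ord.
  by rewrite card_ord Zp_cast // p_gt1.
move/eqP=> e.
have : x \in [set~ 0%R] by rewrite !inE.
by rewrite -e => /imsetP [k _ ->]; exists k.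
Qed.

Lemma Cm1 : (-1 : 'Z_p)%R \in C 0.
Proof.
have n0 : (-1 : 'Z_p)%R != 0%R by rewrite oppr_eq0 oner_eq0.
have [k ek] := @Ccover _ n0.
have hp1 : 0 < p.-1 by rewrite pf; have := f_gt1; lia.
rewrite ek Lexp_mod memCL.
have e2 : (L ^+ (2 * (k %% p.-1)) = L ^+ 0)%R.
  by rewrite mulnC exprM -Lexp_mod -ek expr0 -signr_odd.
move: e2 => /eqP; rewrite (eq_prim_root_expr hl) mod0n => /eqP.
have hm : k %% p.-1 < p.-1 by rewrite ltn_pmod.
move: hm; rewrite pf; set m := k %% (3 * f) => hm.
move/eqP; rewrite -/(dvdn _ _) => /dvdnP [c hc].
have : c < 2.
  rewrite ltnNge; apply/negP => c2.
  have : 2 * (3 * f) <= c * (3 * f) by rewrite leq_mul2r c2 orbT.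
  lia.
case: c hc => [|[|//]] hc _.
  have m0 : m = 0 by lia.
  exfalso; move: ek; rewrite Lexp_mod pf -/m m0 expr0 => /eqP.
  rewrite -subr_eq0 -opprD oppr_eq0 => /eqP e2.
  have := val_Zp_nat p_gt1 2; rewrite mulr2n e2 /= => /esym.
  rewrite modn_small //; have := f_gt1; lia.
apply/eqP; lia.
Qed.


Lemma Cneg x r : ((- x)%R \in C r) = (x \in C r).
Proof.
apply/idP/idP=> h.
  by have := @CM _ _ 0 r Cm1 h; rewrite mulN1r opprK.
by have := @CM _ _ 0 r Cm1 h; rewrite mulN1r.
Qed.

Lemma mulLinj k : injective (fun x : 'Z_p => (L ^+ k * x)%R).
Proof.
move=> x y /= e; have [e' [he _]] := Linv k.
by rewrite -[x]mul1r -[y]mul1r -he -!mulrA e.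
Qed.

Definition N r s (w : 'Z_p) : nat := \sum_(x : 'Z_p) ((x \in C r) * ((w - x)%R \in C s)).

Lemma N_dil r s k w : N (r + k) (s + k) (L ^+ k * w)%R = N r s w.
Proof.
rewrite /N (reindex_inj (mulLinj k)) /=; apply: eq_bigr => x _.
by rewrite -mulrBr !Cmul_iff.
Qed.

Lemma N_swap r s w : N r s w = N s r w.
Proof.
rewrite /N (reindex_inj (inv_inj (subKr w))) /=; apply: eq_bigr => x _.
by rewrite subKr mulnC.
Qed.

Lemma N_mod r r' s s' w : r %% 3 = r' %% 3 -> s %% 3 = s' %% 3 -> N r s w = N r' s' w.
Proof. by move=> hr hs; rewrite /N (@Cmod _ _ hr) (@Cmod _ _ hs). Qed.

Lemma N_wd r s t w : w \in C t -> N r s w = N r s (L ^+ t)%R.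
Proof.
case/memC=> k [-> hk]; have [e [he e3]] := Linv t.
rewrite -(N_dil r s (e + k) (L ^+ t)%R).
have -> : (L ^+ (e + k) * L ^+ t = L ^+ k)%R by rewrite exprD mulrAC he mul1r.
apply: N_mod; lia.
Qed.

Lemma sumCnat r : \sum_(x : 'Z_p) ((x \in C r) : nat) = f.
Proof.
rewrite -(cardC r) -sum1_card [RHS]big_mkcond /=; apply: eq_bigr => w _.
by case: (w \in C r).
Qed.

Lemma sumC (F : 'Z_p -> nat) t : (forall w, w \in C t -> F w = F (L ^+ t)%R) ->
  \sum_(w : 'Z_p) (w \in C t) * F w = f * F (L ^+ t)%R.
Proof.
move=> hF; rewrite -(sumCnat t) big_distrl /=; apply: eq_bigr => w _.
by case h: (w \in C t); rewrite ?mul0n // !mul1n hF.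
Qed.

Lemma coef1 w : (w == 0%R) + (w \in C 0) + (w \in C 1) + (w \in C 2) = 1.
Proof.
case: (eqVneq w 0%R) => [->|h].
  have n r : (0%R \in C r) = false by apply/negP => /C_neq0; rewrite eqxx.
  by rewrite !n.
have [k ek] := @Ccover _ h; rewrite ek !memCL.
have : k %% 3 = 0 \/ k %% 3 = 1 \/ k %% 3 = 2 by lia.
by case=> [->|[->|->]].
Qed.

Lemma sum_split (F : 'Z_p -> nat) : \sum_w F w = F 0%R + \sum_w (w \in C 0) * F w
  + \sum_w (w \in C 1) * F w + \sum_w (w \in C 2) * F w.
Proof.
transitivity (\sum_w ((w == 0%R) + (w \in C 0) + (w \in C 1) + (w \in C 2)) * F w).
  by apply: eq_bigr => w _; rewrite coef1 mul1n.
under eq_bigr do rewrite !mulnDl.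
rewrite !big_split /=; congr (_ + _ + _ + _).
rewrite (bigD1 0%R) //= big1 ?addn0 ?mul1n // => w /negbTE -> //.
Qed.

Lemma N_total r s : \sum_w N r s w = f * f.
Proof.
rewrite /N exchange_big /=.
transitivity (\sum_(x : 'Z_p) (x \in C r) * f).
  apply: eq_bigr => x _; rewrite -big_distrr /=; congr (_ * _).
  rewrite (reindex_inj (addIr x)) /=.
  under eq_bigr do rewrite addrK.
  exact: sumCnat.
by rewrite -big_distrl /= sumCnat.
Qed.

Lemma N00 r : N r r 0%R = f.
Proof.
rewrite /N -(sumCnat r); apply: eq_bigr => x _.
by rewrite sub0r Cneg; case: (x \in C r).
Qed.

Lemma N010 : N 0 1 0%R = 0.
Proof.
rewrite /N big1 // => x _; rewrite sub0r Cneg.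
case h: (x \in C 0) => //; case h': (x \in C 1) => //.
by have := @CdisjP _ _ _ h h'.
Qed.

Lemma N_refl r s t : N r s (L ^+ t)%R = N t s (L ^+ r)%R.
Proof.
have key : \sum_w (w \in C t) * N r s w = \sum_x (x \in C r) * N t s x.
  rewrite /N; under eq_bigr do rewrite big_distrr.
  rewrite exchange_big /=; apply: eq_bigr => x _.
  rewrite big_distrr; apply: eq_bigr => w _ /=.
  by rewrite -opprB Cneg mulnCA.
rewrite (@sumC (N r s) t (fun w => @N_wd r s t w)) (@sumC (N t s) r (fun w => @N_wd t s r w)) in key.
have f0 : 0 < f by have := f_gt1; lia.
by move/eqP: key; rewrite eqn_pmul2l // => /eqP.
Qed.

Lemma N_assoc r s u a : \sum_b N r s b * ((a - b)%R \in C u)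
  = \sum_b N s u b * ((a - b)%R \in C r).
Proof.
transitivity (\sum_x (x \in C r) * N s u (a - x)%R).
  rewrite /N; under eq_bigr do rewrite big_distrl.
  rewrite exchange_big /=; apply: eq_bigr => x _.
  rewrite big_distrr /= (reindex_inj (addIr x)) /=; apply: eq_bigr => e _.
  rewrite addrK -mulnA; congr (_ * (_ * _)).
  by rewrite opprD addrA addrAC.
rewrite [RHS](reindex_inj (inv_inj (subKr a))) /=; apply: eq_bigr => x _.
by rewrite subKr mulnC.
Qed.

Definition c r s t := N r s (L ^+ t)%R.

Lemma conv_part r s u a t : \sum_b (b \in C t) * (N r s b * ((a - b)%R \in C u))
  = c r s t * N t u a.
Proof.
rewrite [in RHS]/N big_distrr; apply: eq_bigr => b _.
case h: (b \in C t) => /=; last by rewrite mul0n muln0.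
by rewrite mul1n (@N_wd r s t b h) mul1n.
Qed.

Lemma conv_split r s u a : \sum_b N r s b * ((a - b)%R \in C u)
  = N r s 0%R * (a \in C u) + c r s 0 * N 0 u a + c r s 1 * N 1 u a + c r s 2 * N 2 u a.
Proof. by rewrite sum_split subr0 !conv_part. Qed.


Lemma sumN r s : \sum_w N r s w = N r s 0%R + f * c r s 0 + f * c r s 1 + f * c r s 2.
Proof.
by rewrite sum_split (@sumC (N r s) 0 (fun w => @N_wd r s 0 w))
  (@sumC (N r s) 1 (fun w => @N_wd r s 1 w)) (@sumC (N r s) 2 (fun w => @N_wd r s 2 w)).
Qed.

Lemma c010 : c 0 1 0 = c 0 0 1.
Proof. by rewrite /c N_swap N_refl. Qed.

Lemma c011 : c 0 1 1 = c 0 0 2.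
Proof.
rewrite /c N_refl -(N_dil 1 1 2 (L ^+ 0)%R) expr0 mulr1.
by apply: N_mod.
Qed.

Lemma c111 : c 1 1 1 = c 0 0 0.
Proof.
rewrite /c -(N_dil 1 1 2 (L ^+ 1)%R) -exprD (@N_wd _ _ 0); last by rewrite memCL.
by apply: N_mod.
Qed.

Lemma c211 : c 2 1 1 = c 0 0 1.
Proof.
rewrite /c N_swap -(N_dil 1 2 2 (L ^+ 1)%R) -exprD (@N_wd _ _ 0); last by rewrite memCL.
rewrite -[N 0 0 _]/(c 0 0 1) -c010 /c; by apply: N_mod.
Qed.

Lemma c101 : c 1 0 1 = c 0 0 2.
Proof. rewrite /c N_swap; exact: c011. Qed.

Lemma c201 : c 2 0 1 = c 0 1 2.
Proof.
rewrite /c N_swap N_refl -(N_dil 1 2 2 (L ^+ 0)%R) expr0 mulr1.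
by apply: N_mod.
Qed.

Lemma cyc_rel : c 0 0 0 + c 0 0 1 + c 0 0 2 + 1 = f /\ c 0 0 1 + c 0 0 2 + c 0 1 2 = f /\
  f + c 0 0 0 * c 0 0 2 + c 0 0 0 * c 0 0 1 + c 0 0 1 * c 0 0 2
   = c 0 0 1 * c 0 0 1 + c 0 0 2 * c 0 0 2 + c 0 1 2 * c 0 1 2.
Proof.
have f0 : 0 < f by have := f_gt1; lia.
split.
  have := N_total 0 0; rewrite sumN N00 => h.
  have : f * (c 0 0 0 + c 0 0 1 + c 0 0 2 + 1) = f * f by lia.
  by move/eqP; rewrite eqn_pmul2l // => /eqP.
split.
  have := N_total 0 1; rewrite sumN N010 add0n c010 c011 => h.
  have : f * (c 0 0 1 + c 0 0 2 + c 0 1 2) = f * f by lia.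
  by move/eqP; rewrite eqn_pmul2l // => /eqP.
have := N_assoc 0 0 1 (L ^+ 1)%R.
rewrite !conv_split N00 N010 !memCL /=.
rewrite -!/(c _ _ 1) c111 c211 c010 c011 c101 c201.
lia.
Qed.

End Cyc.
Section Grp.
Variables (gT : finGroupType) (a : gT) (p l : nat).
Hypotheses (hp : prime p) (hp3 : p %% 3 = 1) (ha : #[a]%g = p)
  (hl : ((p.-1).-primitive_root (l%:R : 'Z_p))%R).
Local Notation L := (l%:R : 'Z_p)%R.
Local Notation f := ((p - 1) %/ 3).

Definition phi (x : 'Z_p) : gT := (a ^+ (x : nat))%g.

Lemma phi_inj : injective phi.
Proof.
move=> x y /eqP; rewrite /phi eq_expg_mod_order ha !modn_small.
- by move/eqP => h; apply/val_inj.
- by apply: (leq_trans (ltn_ord y)); rewrite Zp_cast // prime_gt1.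
- by apply: (leq_trans (ltn_ord x)); rewrite Zp_cast // prime_gt1.
Qed.

Lemma phiD x y : phi (x + y)%R = (phi x * phi y)%g.
Proof.
have h1 : (a ^+ (Zp_trunc p).+2 = 1)%g by rewrite Zp_cast ?prime_gt1 // -ha expg_order.
by rewrite /phi -expgD -[RHS](expg_mod _ h1).
Qed.

Lemma phiL k : phi (L ^+ k)%R = (a ^+ (l ^ k))%g.
Proof.
by rewrite /phi -natrX val_Zp_nat ?prime_gt1 // -ha expg_mod_order.
Qed.

Lemma Xcl1 : Xcl a l f 1 = phi @: C p l 0.
Proof.
apply/setP=> y; apply/imsetP/imsetP.
  case=> j _ ->; exists (L ^+ (3 * j))%R.
    by rewrite (@memCL _ _ hp hp3 hl); apply/eqP; lia.
  by rewrite phiL subnn addn0.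
case=> x /imsetP [j _ ->] ->; exists j => //.
by rewrite phiL subnn.
Qed.

Lemma cnum_N (w : 'Z_p) : cnum a l f 1 1 (phi w) = N p l 0 0 w.
Proof.
pose SZ := [set xy : 'Z_p * 'Z_p | [&& xy.1 \in C p l 0, xy.2 \in C p l 0 & (xy.1 + xy.2)%R == w]].
pose psi := fun xy : 'Z_p * 'Z_p => (phi xy.1, phi xy.2).
have psi_inj : injective psi.
  by move=> [x1 x2] [y1 y2] [/phi_inj -> /phi_inj ->].
rewrite /cnum.
have -> : [set xy : gT * gT | [&& xy.1 \in Xcl a l f 1, xy.2 \in Xcl a l f 1
                          & (xy.1 * xy.2)%g == phi w]] = psi @: SZ.
  apply/setP=> [[u v]]; rewrite !inE /= Xcl1; apply/idP/imsetP.
    case/and3P=> /imsetP [x hx ->] /imsetP [y hy ->] /eqP e.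
    exists (x, y) => //; rewrite inE /= hx hy /=.
    by rewrite -phiD in e; rewrite (@phi_inj _ _ e).
  case=> [[x y]]; rewrite inE /= => /and3P [hx hy /eqP e] [-> ->].
  by rewrite !imset_f //= -phiD e eqxx.
rewrite card_imset // /N -sum1_card big_mkcond /=.
transitivity (\sum_(xy : 'Z_p * 'Z_p) (xy.1 \in C p l 0) * ((xy.2 \in C p l 0) * ((xy.1 + xy.2)%R == w))).
  by apply: eq_bigr => [[x y]] _; rewrite inE /=; case: (x \in C p l 0); case: (y \in C p l 0);
     case: ((x + y)%R == w).
rewrite -(pair_bigA _ (fun x y : 'Z_p => (x \in C p l 0) * ((y \in C p l 0) * ((x + y)%R == w)))) /=.
apply: eq_bigr => x _.
rewrite -big_distrr /=; congr (_ * _).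
rewrite (bigD1 (w - x)%R) //= big1 ?addn0.
  have -> : (x + (w - x))%R = w by rewrite addrC subrK.
  by rewrite eqxx muln1.
move=> y hy; have -> : ((x + y)%R == w) = false.
  apply/negbTE; apply: contra hy => /eqP <-.
  by rewrite addrAC subrr add0r.
by rewrite muln0.
Qed.

Lemma cnum_val i z : i < 3 -> z \in Xcl a l f i.+1 -> cnum a l f 1 1 z = c p l 0 0 i.
Proof.
move=> hi /imsetP [j _ ->].
rewrite -phiL cnum_N /c (@N_wd p l hp hp3 hl 0 0 i) // memCL //.
apply/eqP; lia.
Qed.

End Grp.

Local Open Scope ring_scope.

Lemma dvd_ex (p : nat) (m : int) : (p %| `|m|)%N -> exists u, m = (p%:Z * u)%R.
Proof.
move=> h; have : (p%:Z %| m)%Z by rewrite dvdzE.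
by case/dvdzP => q ->; exists q; rewrite mulrC.
Qed.

Lemma euclidZ (p : nat) (m n k : int) : prime p -> (m * n = p%:Z * k)%R ->
  (exists u, m = (p%:Z * u)%R) \/ (exists u, n = (p%:Z * u)%R).
Proof.
move=> hp e.
have : (p %| `|m| * `|n|)%N by rewrite -abszM e abszM /= dvdn_mulr.
by rewrite Euclid_dvdM // => /orP [h|h]; [left|right]; apply: dvd_ex.
Qed.

Arguments euclidZ {p m n k}.

Lemma no27 (p : nat) (u : int) : prime p -> (p %% 3 = 1)%N -> (27 = p%:Z * u)%R -> False.
Proof.
move=> hp hp3 e.
have : (p %| 3 ^ 3)%N.
  have := congr1 absz e; rewrite abszM /= => h.
  by apply/dvdnP; exists `|u|%N; rewrite mulnC -h.
rewrite Euclid_dvdX // andbT => /dvdn_leq h.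
have := prime_gt1 hp; have := h isT; lia.
Qed.


Arguments no27 {p u}.

Lemma sqV (U V : int) : 27 * V ^+ 2 - 16 + U ^+ 2 = 0 -> V = 0.
Proof. move=> h; nia. Qed.

Lemma sqU (U V : int) : 27 * V ^+ 2 - 16 + U ^+ 2 = 0 -> V = 0 -> U = 4 \/ U = -4.
Proof. move=> h V0; rewrite V0 in h; nia. Qed.

Arguments sqV {U V}.
Arguments sqU {U V}.

Lemma core (p : nat) (x y x' y' U u u' : int) : prime p -> (p %% 3 = 1)%N ->
  x = 3 * u + 1 -> x' = 3 * u' + 1 -> 4 * p%:Z = x ^+ 2 + 27 * y ^+ 2 ->
  4 * p%:Z = x' ^+ 2 + 27 * y' ^+ 2 -> x * x' + 27 * y * y' = p%:Z * U -> x = x'.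
Proof.
move=> hp hp3 hx hx' h1 h2 eU.
have p0 : p%:Z != 0 by have := prime_gt1 hp; lia.
set Q := x * y' - x' * y.
have id : 27 * Q * Q + (x * x' + 27 * y * y') ^+ 2 = (x ^+ 2 + 27 * y ^+ 2) * (x' ^+ 2 + 27 * y' ^+ 2).
  rewrite /Q; ring.
rewrite -h1 -h2 eU in id.
have hQ : (27 * Q) * Q = p%:Z * (p%:Z * (16 - U ^+ 2)) by lia.
have [V hV] : exists V, Q = p%:Z * V.
  have [[v hv]|[V hV]] := euclidZ hp hQ; last by exists V.
  have [[w hw]|[V hV]] := euclidZ hp hv; last by exists V.
  by case: (no27 hp hp3 hw).
rewrite hV in hQ.
have : p%:Z * (p%:Z * (27 * V ^+ 2 - 16 + U ^+ 2)) = 0 by clear -hQ; lia.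
move/eqP; rewrite !mulf_eq0 (negbTE p0) /= => /eqP e3.
have V0 := sqV e3.
have := sqU e3 V0.
case=> hU.
  have Q0 : Q = 0 by rewrite hV V0 mulr0.
  have id2 : x' * (x * x' + 27 * y * y') - x * (x' ^+ 2 + 27 * y' ^+ 2) = - 27 * y' * Q.
    rewrite /Q; ring.
  rewrite eU -h2 Q0 hU mulr0 in id2.
  have : (4 * p%:Z) * (x' - x) = 0 by clear -id2; lia.
  move/eqP; rewrite mulf_eq0 => /orP [/eqP h4|]; first by (clear -h4 p0; lia).
  by rewrite subr_eq0 => /eqP.
exfalso; rewrite hU hx hx' in eU; clear -eU hp3; lia.
Qed.

Arguments core {p x y x' y' U u u'}.

Lemma uniq4p (p : nat) (x y x' y' u u' : int) : prime p -> (p %% 3 = 1)%N ->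
  x = 3 * u + 1 -> x' = 3 * u' + 1 -> 4 * p%:Z = x ^+ 2 + 27 * y ^+ 2 ->
  4 * p%:Z = x' ^+ 2 + 27 * y' ^+ 2 -> x = x' /\ y ^+ 2 = y' ^+ 2.
Proof.
move=> hp hp3 hx hx' h1 h2.
suff e : x = x' by split => //; rewrite -e in h2; lia.
have hx2 : x ^+ 2 = 4 * p%:Z - 27 * y ^+ 2 by lia.
have hx2' : x' ^+ 2 = 4 * p%:Z - 27 * y' ^+ 2 by lia.
have e : (x * x' - 27 * y * y') * (x * x' + 27 * y * y')
   = p%:Z * (16 * p%:Z - 108 * y ^+ 2 - 108 * y' ^+ 2).
  have -> : (x * x' - 27 * y * y') * (x * x' + 27 * y * y') = x ^+ 2 * x' ^+ 2 - 729 * y ^+ 2 * y' ^+ 2 by ring.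
  rewrite hx2 hx2'; ring.
have [[U hU]|[U hU]] := euclidZ hp e.
  apply: (core (y' := - y') (U := U) hp hp3 hx hx' h1); first by rewrite sqrrN.
  by rewrite -hU; ring.
exact: (core hp hp3 hx hx' h1 h2 hU).
Qed.

Close Scope ring_scope.

Lemma card3_val n1 n2 n3 : n2 != n3 ->
  card3 n1 n2 n3 = if (n1 == n2) || (n1 == n3) then 2 else 3.
Proof.
move=> h; rewrite /card3 /= !inE (negbTE h).
by case: (n1 == n2); case: (n1 == n3).
Qed.

Local Open Scope ring_scope.

Lemma sq_cases (a b : int) : a ^+ 2 = b ^+ 2 -> a = b \/ a = - b.
Proof.
move=> h; have : (a - b) * (a + b) = 0 by rewrite -subr_sqr h subrr.
move/eqP; rewrite mulf_eq0 => /orP [/eqP|/eqP] e; [left|right]; lia.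
Qed.

Lemma t_norm (p : nat) (t k : int) : (p %% 3 = 1)%N -> p%:Z = t ^+ 2 + 3 * k ->
  exists u, t ^+ 2 = (3 * u + 1) ^+ 2.
Proof.
move=> hp3 e.
have ht : t = 3 * (t %/ 3)%Z + (t %% 3)%Z by lia.
have hr : 0 <= (t %% 3)%Z < 3 by lia.
set q := (t %/ 3)%Z in ht; set r := (t %% 3)%Z in ht hr.
have : r = 0 \/ r = 1 \/ r = 2 by lia.
case=> [h|[h|h]]; rewrite h in ht.
- rewrite ht in e; exfalso.
  have : p%:Z = 3 * (3 * q ^+ 2 + k) by rewrite e; ring.
  lia.
- by exists q; rewrite ht.
- by exists (- q - 1); rewrite ht; ring.
Qed.

Lemma no_sq (p : nat) (L : int) : prime p -> (p %% 3 = 1)%N -> 4 * p%:Z = L ^+ 2 -> False.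
Proof.
move=> hp hp3 e.
have e2 : L * L = p%:Z * 4 by rewrite -expr2 -e mulrC.
have p0 : p%:Z != 0 by have := prime_gt1 hp; lia.
have [[w hw]|[w hw]] := euclidZ hp e2;
  rewrite hw in e2;
  (have : p%:Z * (p%:Z * (w * w) - 4) = 0 by rewrite mulrBr -e2; ring);
  move/eqP; rewrite mulf_eq0 (negbTE p0) /= subr_eq0 => /eqP e4;
  (have : (p %| 4)%N by
    (have := congr1 absz e4; rewrite abszM => h4; apply/dvdnP; exists `|(w * w)%R|%N; rewrite mulnC; exact: (esym h4)));
  move/dvdn_leq => /(_ isT) h4;
  (have : p = 4%N by have := prime_gt1 hp; lia);
  by move=> e5; move: hp; rewrite e5.
Qed.

Lemma final_num (p f A B C D i : nat) : prime p -> (p %% 3 = 1)%N -> f = ((p - 1) %/ 3)%N ->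
  (A + B + C + 1 = f)%N -> (B + C + D = f)%N ->
  (f + A * C + A * B + B * C = B * B + C * C + D * D)%N -> (i = 1 \/ i = 2)%N ->
  let T := card3 (A + 2 * (i - 1)) B C in
  (T = 2 \/ T = 3)%N /\ (T = 2%N <-> exists t : int, p%:Z = t ^+ 2 + 3 * (i%:Z) ^+ 2).
Proof.
move=> hp hp3 hf h1 h2 h3 hi T.
pose Lz : int := 6 * f%:Z - 9 * (B%:Z + C%:Z) - 2.
pose Mz : int := B%:Z - C%:Z.
have hpf : p%:Z = 3 * f%:Z + 1 by lia.
have eA : A%:Z = f%:Z - 1 - B%:Z - C%:Z by lia.
have eD : D%:Z = f%:Z - B%:Z - C%:Z by lia.
have h3' : f%:Z + A%:Z * C%:Z + A%:Z * B%:Z + B%:Z * C%:Z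
    = B%:Z * B%:Z + C%:Z * C%:Z + D%:Z * D%:Z.
  by have := congr1 Posz h3; rewrite !PoszD !PoszM.
rewrite eA eD in h3'.
have key : 4 * p%:Z = Lz ^+ 2 + 27 * Mz ^+ 2.
  rewrite hpf /Lz /Mz; lia.
have BC : B != C.
  apply/eqP => e; apply: (@no_sq p Lz hp hp3).
  by rewrite key /Mz e subrr expr0n /= mulr0 addr0.
have hT : T = if (A + 2 * (i - 1) == B)%N || (A + 2 * (i - 1) == C)%N then 2%N else 3%N.
  by rewrite /T card3_val.
split; first by rewrite hT; case: ifP => _; [left|right].
have hLz : Lz = 3 * (2 * f%:Z - 3 * (B%:Z + C%:Z) - 1) + 1 by rewrite /Lz; ring.
rewrite hT; case: hi => ->; rewrite /= ?subnn ?muln0 ?addn0.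
-
  split.
  + case: ifP => // /orP [/eqP e|/eqP e] _.
    * exists (Lz - 3).
      have e3 : 3 * Mz = Lz - 4 by rewrite /Mz /Lz; lia.
      have e9 : 9 * Mz ^+ 2 = (Lz - 4) ^+ 2 by rewrite -e3; ring.
      clear -key e9; lia.
    * exists (Lz - 3).
      have e3 : 3 * Mz = - (Lz - 4) by rewrite /Mz /Lz; lia.
      have e9 : 9 * Mz ^+ 2 = (- (Lz - 4)) ^+ 2 by rewrite -e3; ring.
      rewrite sqrrN in e9.
      clear -key e9; lia.
  + case=> t ht.
    have [u hu] := @t_norm p t _ hp3 ht.
    have k2 : 4 * p%:Z = (3 * (u + 1) + 1) ^+ 2 + 27 * u ^+ 2.
      rewrite ht hu; ring.
    have [ex ey] := @uniq4p p _ _ _ _ _ _ hp hp3 hLz (erefl _) key k2.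
    have [em|em] := @sq_cases _ _ ey; apply/ifT/orP; [left|right]; apply/eqP.
    * have : Lz - 4 = 3 * Mz by rewrite ex em; ring.
      move=> hh; clear -hh eA; rewrite /Lz /Mz in hh; lia.
    * have : Lz - 4 = - 3 * Mz by rewrite ex em; ring.
      move=> hh; clear -hh eA; rewrite /Lz /Mz in hh; lia.
-
  split.
  + case: ifP => // /orP [/eqP e|/eqP e] _.
    * exists (Lz + 6).
      have e3 : 3 * Mz = Lz + 8 by rewrite /Mz /Lz; lia.
      have e9 : 9 * Mz ^+ 2 = (Lz + 8) ^+ 2 by rewrite -e3; ring.
      clear -key e9; lia.
    * exists (Lz + 6).
      have e3 : 3 * Mz = - (Lz + 8) by rewrite /Mz /Lz; lia.
      have e9 : 9 * Mz ^+ 2 = (- (Lz + 8)) ^+ 2 by rewrite -e3; ring.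
      rewrite sqrrN in e9.
      clear -key e9; lia.
  + case=> t ht.
    have [u hu] := @t_norm p t _ hp3 ht.
    have k2 : 4 * p%:Z = (3 * (u - 2) + 1) ^+ 2 + 27 * (u + 1) ^+ 2.
      rewrite ht hu; ring.
    have [ex ey] := @uniq4p p _ _ _ _ _ _ hp hp3 hLz (erefl _) key k2.
    have [em|em] := @sq_cases _ _ ey; apply/ifT/orP; [left|right]; apply/eqP.
    * have : Lz + 8 = 3 * Mz by rewrite ex em; ring.
      move=> hh; clear -hh eA; rewrite /Lz /Mz in hh; lia.
    * have : Lz + 8 = - 3 * Mz by rewrite ex em; ring.
      move=> hh; clear -hh eA; rewrite /Lz /Mz in hh; lia.
Qed.

Close Scope ring_scope.

Theorem lemma7p3 (gT : finGroupType) (a : gT) (p l : nat)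
  (hp : prime p) (hp3 : p %% 3 = 1) (ha : #[a]%g = p)
  (hl : ((p.-1).-primitive_root (l%:R : 'Z_p))%R)
  (z1 z2 z3 : gT)
  (hz1 : z1 \in Xcl a l ((p - 1) %/ 3) 1)
  (hz2 : z2 \in Xcl a l ((p - 1) %/ 3) 2)
  (hz3 : z3 \in Xcl a l ((p - 1) %/ 3) 3) :
  forall i : nat, (i = 1 \/ i = 2) ->
    let f := ((p - 1) %/ 3)%N in
    let T := card3 (cnum a l f 1 1 z1 + 2 * (i - 1)) (cnum a l f 1 1 z2)
                   (cnum a l f 1 1 z3) in
    (T = 2 \/ T = 3) /\
    (T = 2 <-> exists t : int, (p%:Z = t ^+ 2 + 3 * (i%:Z) ^+ 2)%R).
Proof.
move=> i hi f T.
have e1 := @cnum_val gT a p l hp hp3 ha hl 0 z1 isT hz1.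
have e2 := @cnum_val gT a p l hp hp3 ha hl 1 z2 isT hz2.
have e3 := @cnum_val gT a p l hp hp3 ha hl 2 z3 isT hz3.
rewrite /T /f e1 e2 e3.
have [h1 [h2 h3]] := cyc_rel p l hp hp3 hl.
exact: (@final_num p _ _ _ _ _ i hp hp3 (erefl _) h1 h2 h3 hi).
Qed.
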